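(* Let $\mathcal{X}=\{\boldsymbol{x}_j\}_{j=1}^{N}$ be a finite dataset with ground-truth partition $\mathcal{S}^*=\{\mathcal{S}_k^*\}_{k=1}^K$, let $\omega>0$, and let $\mathcal{C}$ be the set of all pairwise constraints derived from $\mathcal{S}^*$, i.e. for every pair $j\neq j'$ it contains $(j,j',y)$ with $y=1$ if $\boldsymbol{x}_j,\boldsymbol{x}_{j'}$ lie in the same cluster and $y=0$ otherwise. Suppose $\mathcal{Z}^*=\{\boldsymbol{z}_j^*\}_{j=1}^N\subset\mathbb{R}^D\setminus\{\mathbf{0}\}$ satisfies $\mathcal{L}_{\mathrm{ang}}(\mathcal{Z}^*;\mathcal{C},\omega)=0$. Then for any $\boldsymbol{x}_j\in\mathcal{S}_k^*$ and $\boldsymbol{x}_{j'}\in\mathcal{S}_{k'}^*$: $\theta_{\boldsymbol{z}_j^*,\boldsymbol{z}_{j'}^*}=0$ if $k=k'$, and $\theta_{\boldsymbol{z}_j^*,\boldsymbol{z}_{j'}^*}\ge \pi/\omega$ if $k\neq k'$.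
   Context: For nonzero $\boldsymbol{u},\boldsymbol{v}\in\mathbb{R}^D$, $\theta_{\boldsymbol{u},\boldsymbol{v}}=\arccos\big(\langle\boldsymbol{u},\boldsymbol{v}\rangle/(\|\boldsymbol{u}\|\|\boldsymbol{v}\|)\big)\in[0,\pi]$. Given constraints $\mathcal{C}=\{(a_i,b_i,y_i)\}_{i=1}^{|\mathcal{C}|}$ with $y_i\in\{0,1\}$, embeddings $\boldsymbol{z}_j$ and a factor $\omega>0$, the SpherePair loss is $\mathcal{L}_{\mathrm{ang}}=-\frac{1}{|\mathcal{C}|}\sum_{i}\big(y_i\log \mathrm{Sim}(a_i,b_i)+(1-y_i)\log(1-\mathrm{Sim}(a_i,b_i))\big)$, where $\mathrm{Sim}(a_i,b_i)=\tfrac12(\cos\theta_{\boldsymbol{z}_{a_i},\boldsymbol{z}_{b_i}}+1)$ if $y_i=1$ and $\mathrm{Sim}(a_i,b_i)=\tfrac12(\cos(\min(\omega\theta_{\boldsymbol{z}_{a_i},\boldsymbol{z}_{b_i}},\pi))+1)$ if $y_i=0$ (with the convention $\log 0=-\infty$). *)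

(* Defs.v *)
From HB Require Import structures.
From mathcomp Require Import all_boot all_order all_algebra.
From mathcomp Require Import all_classical all_reals all_analysis.
Set Implicit Arguments. Unset Strict Implicit. Unset Printing Implicit Defensive.
Import Order.TTheory GRing.Theory Num.Theory.
Local Open Scope ring_scope.

Definition dotv {R : realType} {D : nat} (u v : 'rV[R]_D) : R :=
  \sum_(i < D) u 0 i * v 0 i.
Definition normv {R : realType} {D : nat} (u : 'rV[R]_D) : R :=
  Num.sqrt (dotv u u).

Definition angle {R : realType} {D : nat} (u v : 'rV[R]_D) : R :=
  acos (dotv u v / (normv u * normv v)).

(* Extended logarithm, with log 0 = -oo (and log x = -oo for x <= 0). *)
Definition elog {R : realType} (x : R) : \bar R :=
  if 0 < x then (ln x)%:E else -oo%E.

Definition Sim {R : realType} {D : nat} (omega : R) (za zb : 'rV[R]_D) (y : bool) : R :=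
  if y then (cos (angle za zb) + 1) / 2
  else (cos (Order.min (omega * angle za zb) pi) + 1) / 2.

(* Constraints: triples (a_i, b_i, y_i), y_i = true means y_i = 1. *)
Definition L_ang {R : realType} {N D : nat} (Z : 'I_N -> 'rV[R]_D)
    (C : seq ('I_N * 'I_N * bool)) (omega : R) : \bar R :=
  (- (((size C)%:R^-1 : R)%:E *
      \sum_(c <- C)
        (((c.2%:R : R)%:E * elog (Sim omega (Z c.1.1) (Z c.1.2) c.2)) +
         (((1 - c.2%:R) : R)%:E * elog (1 - Sim omega (Z c.1.1) (Z c.1.2) c.2)))))%E.

(* All pairwise constraints derived from the ground-truth partition, given by
   a cluster-assignment function lab : 'I_N -> 'I_K (x_j in S_k iff lab j = k):
   for every ordered pair j <> j', the triple (j, j', [lab j == lab j']). *)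
Definition all_constraints {N K : nat} (lab : 'I_N -> 'I_K) : seq ('I_N * 'I_N * bool) :=
  [seq (p.1, p.2, lab p.1 == lab p.2) | p <- enum [pred p : 'I_N * 'I_N | p.1 != p.2]].

(* Main.v *)
Require Import Defs.
From HB Require Import structures.
From mathcomp Require Import all_boot all_order all_algebra.
From mathcomp Require Import all_classical all_reals all_analysis.
From mathcomp Require Import lra.
Import Order.TTheory GRing.Theory Num.Theory.
Local Open Scope ring_scope.

Section H.
Variable R : realType.

Lemma acos_rng (x : R) : 0 <= acos x <= pi.
Proof.
rewrite unlock /acos; case: xgetP => [y -> [] //|_].
by rewrite /point /= lexx pi_ge0.
Qed.

Lemma angle_rng D (u v : 'rV[R]_D) : 0 <= angle u v <= pi.
Proof. exact: acos_rng. Qed.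

Lemma adde_le0_eq0 (a b : \bar R) : (a <= 0 -> b <= 0 -> a + b = 0 -> a = 0 /\ b = 0)%E.
Proof.
case: a => [r| |]; case: b => [s| |] //=; rewrite ?lee_fin => ha hb //.
move=> [] h; split; congr (_%:E); lra.
Qed.

Lemma sum_le0_eq0 (T : eqType) (s : seq T) (F : T -> \bar R) :
  (forall c, F c <= 0)%E -> (\sum_(c <- s) F c = 0)%E ->
  forall c, c \in s -> F c = 0%E.
Proof.
move=> H; elim: s => [|a s IH] //=; rewrite big_cons => /adde_le0_eq0 [] //.
  by apply: sume_le0.
move=> Ha Hs c; rewrite inE => /orP [/eqP -> //|]; exact: IH.
Qed.

Lemma elog_le0 (x : R) : x <= 1 -> (elog x <= 0)%E.
Proof. by rewrite /elog; case: ifP => // _ /ln_le0; rewrite lee_fin. Qed.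

Lemma elog_eq0 (x : R) : elog x = 0%E -> x = 1.
Proof.
rewrite /elog; case: ifP => // x0 [] h.
by rewrite -(lnK (x:=x)) ?posrE // h expR0.
Qed.

Lemma Sim_rng D omega (u v : 'rV[R]_D) y : 0 <= Sim omega u v y <= 1.
Proof.
have key (x : R) : 0 <= (cos x + 1) / 2 <= 1.
  have a := @cos_le1 R x; have b := @cos_geN1 R x.
  apply/andP; split; lra.
by rewrite /Sim; case: y; apply: key.
Qed.

End H.

Theorem proposition1 (R : realType) (N K D : nat) (lab : 'I_N -> 'I_K)
    (omega : R) (Z : 'I_N -> 'rV[R]_D) :
  0 < omega ->
  (forall j, Z j != 0) ->
  L_ang Z (all_constraints lab) omega = 0%E ->
  forall (j j' : 'I_N) (k k' : 'I_K), lab j = k -> lab j' = k' ->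
    (k = k' -> angle (Z j) (Z j') = 0) /\
    (k <> k' -> pi / omega <= angle (Z j) (Z j')).
Proof.
move=> om0 Z0 HL j j' k k' <- <-.
have [<-|jj'] := eqVneq j j'.
  split=> // _; rewrite /angle.
  set u := Z j.
  have ge : 0 <= dotv u u.
    by apply: sumr_ge0 => i _; rewrite -expr2 sqr_ge0.
  have d0 : 0 < dotv u u.
    rewrite lt_def ge andbT; apply/eqP => h; apply: (negP (Z0 j)); apply/eqP/rowP => i.
    have hp : forall i : 'I_D, true -> 0 <= u 0 i * u 0 i.
      by move=> i' _; rewrite -expr2 sqr_ge0.
    have := @psumr_eq0P _ _ _ _ hp h i isT.
    by rewrite mxE => /eqP; rewrite mulf_eq0 orbb => /eqP.
  by rewrite /normv -expr2 sqr_sqrtr ?(ltW d0) // divff ?gt_eqF // acos1.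
have mem : (j, j', lab j == lab j') \in all_constraints lab.
  by apply/mapP; exists (j, j'); rewrite ?mem_enum.
have Cn0 : (0 < size (all_constraints lab))%N.
  by case: (all_constraints lab) mem.
move: HL; rewrite /L_ang => /eqP; rewrite oppe_eq0 mule_eq0 eqe invr_eq0 pnatr_eq0.
rewrite eqn0Ngt Cn0 /= => /eqP Hs.
move/sum_le0_eq0: Hs => Hs; lapply Hs; last first.
  move=> [[a b] y] /=.
  have /andP[s0 s1] := @Sim_rng R _ omega (Z a) (Z b) y.
  apply: adde_le0; move: s0 s1; case: y => /= s0 s1; rewrite ?subrr ?subr0 ?mul0e ?mul1e //; apply: (@elog_le0 R); lra.
move=> {}Hs; move: (Hs _ mem); case E: (lab j == lab j') => /=; rewrite ?subrr ?subr0 ?mul0e ?mul1e ?add0e ?adde0 => /elog_eq0 h.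
  have c1 : cos (angle (Z j) (Z j')) = 1 by lra.
  split=> [_|/eqP]; last by rewrite E.
  have /andP [a0 a1] := @angle_rng R _ (Z j) (Z j').
  by rewrite -(@cosK R (angle (Z j) (Z j'))) ?c1 ?acos1 // in_itv /= a0 a1.
split=> [/eqP|_]; first by rewrite E.
set t := angle (Z j) (Z j') in h *.
have c1 : cos (Num.min (omega * t) pi) = -1 by lra.
have /andP [a0 a1] := @angle_rng R _ (Z j) (Z j').
have [hm|hm] := leP (omega * t) pi; last first.
  by rewrite ler_pdivrMr // mulrC ltW.
move: c1; rewrite (min_l hm) => c1.
have : omega * t = pi.
  rewrite -(@cosK R (omega * t)) ?c1 ?acosN1 // in_itv /= hm andbT.
  by apply: mulr_ge0 => //; apply: ltW.
by move=> e; rewrite ler_pdivrMr // mulrC e.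
Qed.
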